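(* Let $(V,d)$ have doubling dimension at most $\kappa$, and let $\Pi$ and the areas $A(j,r)$ be constructed as below. For every subset $\mathcal{C}\subseteq V$ of clients there exists $S\subseteq\Pi$ such that $\mathcal{C}\subseteq\bigcup\{A(j,r):\langle j,r\rangle\in S\}$ and $$\sum_{\langle j,r\rangle\in S}(f_j+7\cdot 5^r)=\mathcal{O}(2^{2\kappa}\cdot\mathrm{OPT}),$$ i.e. at most an absolute constant times $2^{2\kappa}\cdot\mathrm{OPT}$.
   Context: $(V,d)$ is a metric space of diameter $W$ whose doubling dimension is at most $\kappa$: every ball $B(x,\rho)=\{y\in V:d(x,y)\le\rho\}$ can be covered by $2^\kappa$ balls of radius $\rho/2$. $F\subseteq V$ is a finite set of facilities with opening costs $f_j>0$, $f_{\min}=\min_j f_j$. $\mathrm{OPT}$ is the minimum, over all finite collections of balls $B(j,R)$ with $j\in F$, $R\ge0$, whose union contains $\mathcal{C}$, of $\sum(f_j+R)$. Let $\rho_{\min}=\lfloor\log_5 f_{\min}\rfloor$, $\rho_{\max}=\lceil\log_5 W\rceil$. For each integer $r\in[\rho_{\min},\rho_{\max}]$, let $J'_r=\{j\in F:f_j\le 5^r\}$ and let $J_r$ be a maximal subset of $J'_r$ such that any two facilities of $J_r$ are at distance greater than $5^{r+1}$. $\Pi=\{\langle j,r\rangle:\rho_{\min}\le r\le\rho_{\max},\ j\in J_r\}$. The tree $\mathcal{T}$ on $\Pi$ has as root the unique pair with $r=\rho_{\max}$, and for $r<\rho_{\max}$, $\mathrm{parent}(j,r)=\langle j',r+1\rangle$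 where $j'$ is a facility of $J_{r+1}$ closest to $j$ (ties arbitrary). Areas: initialize $A(j,r)=\emptyset$; for each point $p\in V$ lying in some ball $B(j,7\cdot5^r)$ with $\langle j,r\rangle\in\Pi$, let $r^*$ be the minimum $r$ for which some $\langle j,r^*\rangle\in\Pi$ has $p\in B(j,7\cdot5^{r^*})$, let $\langle j^*,r^*\rangle$ be such a pair minimizing $d(p,j^* )$, and add $p$ to $A(j^*,r^* )$ and to $A(j',r')$ for every ancestor $\langle j',r'\rangle$ of $\langle j^*,r^*\rangle$ in $\mathcal{T}$. *)

(* Defs.v *)
From Stdlib Require Import Reals List ZArith.
Open Scope R_scope.

Section Defs.
Context {V : Type} (d : V -> V -> R).

Record metric : Prop := {
  d_nonneg : forall x y, 0 <= d x y;
  d_zero : forall x y, d x y = 0 <-> x = y;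
  d_sym : forall x y, d x y = d y x;
  d_tri : forall x y z, d x z <= d x y + d y z }.

Definition ball (x : V) (rho : R) (y : V) : Prop := d x y <= rho.

Definition doubling (kappa : R) : Prop :=
  forall (x : V) (rho : R), exists L : list V,
    INR (length L) <= Rpower 2 kappa /\
    forall y, ball x rho y -> exists c, In c L /\ ball c (rho / 2) y.

Definition is_diameter (W : R) : Prop :=
  is_lub (fun w => exists x y, w = d x y) W.

End Defs.

Definition Zfloor (x : R) : Z := (up x - 1)%Z.
Definition Zceil (x : R) : Z := (- Zfloor (- x))%Z.
Definition log5 (x : R) : R := ln x / ln 5.
Definition pow5 (r : Z) : R := powerRZ 5 r.

Definition f_min {V : Type} (F : list V) (f : V -> R) : R :=
  match F with
  | nil => 0
  | j :: l => fold_right (fun x m => Rmin (f x) m) (f j) l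
  end.

Definition rho_min {V : Type} (F : list V) (f : V -> R) : Z := Zfloor (log5 (f_min F f)).
Definition rho_max (W : R) : Z := Zceil (log5 W).

Section Construction.
Context {V : Type} (d : V -> V -> R) (F : list V) (f : V -> R)
  (rmin rmax : Z).

Definition Jprime (r : Z) (j : V) : Prop := In j F /\ f j <= pow5 r.

(** J r is a maximal subset of J'_r whose points are pairwise at distance > 5^(r+1),
    for every r in [rmin, rmax] *)
Definition valid_J (J : Z -> V -> Prop) : Prop :=
  forall r, (rmin <= r <= rmax)%Z ->
    (forall j, J r j -> Jprime r j) /\
    (forall j1 j2, J r j1 -> J r j2 -> j1 <> j2 -> pow5 (r + 1) < d j1 j2) /\
    (forall j, Jprime r j -> ~ J r j -> exists j', J r j' /\ d j j' <= pow5 (r + 1)).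

Definition inPi (J : Z -> V -> Prop) (x : V * Z) : Prop :=
  (rmin <= snd x <= rmax)%Z /\ J (snd x) (fst x).

(** parent(j,r) = <par j r, r+1>, with par j r a facility of J_{r+1} closest to j *)
Definition valid_parent (J : Z -> V -> Prop) (par : V -> Z -> V) : Prop :=
  forall j r, (rmin <= r < rmax)%Z -> J r j ->
    J (r + 1)%Z (par j r) /\ forall j', J (r + 1)%Z j' -> d j (par j r) <= d j j'.

Definition tree_step (par : V -> Z -> V) (x : V * Z) : V * Z :=
  (par (fst x) (snd x), (snd x + 1)%Z).

Definition covered (J : Z -> V -> Prop) (p : V) : Prop :=
  exists j r, inPi J (j, r) /\ ball d j (7 * pow5 r) p.

Definition valid_star (J : Z -> V -> Prop) (rs : V -> Z) (js : V -> V) : Prop :=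
  forall p, covered J p ->
    inPi J (js p, rs p) /\ ball d (js p) (7 * pow5 (rs p)) p /\
    (forall j r, inPi J (j, r) -> ball d j (7 * pow5 r) p -> (rs p <= r)%Z) /\
    (forall j, inPi J (j, rs p) -> ball d j (7 * pow5 (rs p)) p ->
       d (js p) p <= d j p).

Definition area (J : Z -> V -> Prop) (par : V -> Z -> V) (rs : V -> Z) (js : V -> V)
  (x : V * Z) (p : V) : Prop :=
  covered J p /\ exists n : nat, Nat.iter n (tree_step par) (js p, rs p) = x.

End Construction.

Section Opt.
Context {V : Type} (d : V -> V -> R) (F : list V) (f : V -> R).

Definition feasible_cover (C : V -> Prop) (L : list (V * R)) : Prop :=
  (forall b, In b L -> In (fst b) F /\ 0 <= snd b) /\
  (forall p, C p -> exists b, In b L /\ ball d (fst b) (snd b) p).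

Definition cover_cost (L : list (V * R)) : R :=
  fold_right (fun b acc => f (fst b) + snd b + acc) 0 L.

Definition is_OPT (C : V -> Prop) (opt : R) : Prop :=
  (forall L, feasible_cover C L -> opt <= cover_cost L) /\
  (forall b, (forall L, feasible_cover C L -> b <= cover_cost L) -> b <= opt).

Definition pi_cost (S : list (V * Z)) : R :=
  fold_right (fun x acc => f (fst x) + 7 * pow5 (snd x) + acc) 0 S.

End Opt.

(* Main.v *)
Require Import Defs.
From Stdlib Require Import Reals List ZArith Lra Lia ClassicalEpsilon Classical.
Open Scope R_scope.

Lemma pow5_pos r : 0 < pow5 r.
Proof. unfold pow5; apply powerRZ_lt; lra. Qed.

Lemma pow5_succ r : pow5 (r + 1) = 5 * pow5 r.
Proof. unfold pow5. rewrite powerRZ_add by lra. simpl. lra. Qed.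

Lemma pow5_le a b : (a <= b)%Z -> pow5 a <= pow5 b.
Proof.
  intros H. replace b with (a + Z.of_nat (Z.to_nat (b - a)))%Z by lia.
  induction (Z.to_nat (b - a)) as [|n IH].
  - simpl. rewrite Z.add_0_r. lra.
  - rewrite Nat2Z.inj_succ, <- Z.add_1_r, Z.add_assoc, pow5_succ.
    pose proof (pow5_pos (a + Z.of_nat n)). lra.
Qed.

Lemma pow5_lt_inv a b : pow5 a < pow5 b -> (a < b)%Z.
Proof. intros H. destruct (Z_lt_le_dec a b); auto. apply pow5_le in l. lra. Qed.

Lemma pow5_le_inv a b : pow5 a <= pow5 b -> (a <= b)%Z.
Proof.
  intros H. destruct (Z_le_gt_dec a b); auto.
  assert (Hb : (b + 1 <= a)%Z) by lia. apply pow5_le in Hb. rewrite pow5_succ in Hb.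
  pose proof (pow5_pos b). lra.
Qed.

Lemma Zfloor_spec x : IZR (Zfloor x) <= x < IZR (Zfloor x) + 1.
Proof.
  unfold Zfloor. rewrite minus_IZR. destruct (archimed x). simpl. lra.
Qed.

Lemma Zceil_spec x : x <= IZR (Zceil x) < x + 1.
Proof.
  unfold Zceil. rewrite opp_IZR. destruct (Zfloor_spec (- x)). lra.
Qed.

Lemma pow5_Rpower r : pow5 r = Rpower 5 (IZR r).
Proof. unfold pow5. apply powerRZ_Rpower. lra. Qed.

Lemma Rpower_log5 m : 0 < m -> Rpower 5 (log5 m) = m.
Proof.
  intros Hm. unfold Rpower, log5. assert (0 < ln 5) by (rewrite <- ln_1; apply ln_increasing; lra).
  replace (ln m / ln 5 * ln 5) with (ln m) by (field; lra). apply exp_ln; auto.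
Qed.

Lemma floor_log5 m : 0 < m -> pow5 (Zfloor (log5 m)) <= m.
Proof.
  intros Hm. rewrite pow5_Rpower. pose proof (Rpower_log5 m Hm) as E.
  set (y := log5 m) in *. rewrite <- E. apply Rle_Rpower; [lra|]. apply Zfloor_spec.
Qed.

Lemma ceil_log5 m : 0 < m -> m <= pow5 (Zceil (log5 m)) < 5 * m.
Proof.
  intros Hm. rewrite pow5_Rpower. pose proof (Rpower_log5 m Hm) as E.
  set (y := log5 m) in *. rewrite <- E.
  destruct (Zceil_spec y). split.
  - apply Rle_Rpower; lra.
  - replace 5 with (Rpower 5 1) at 2. rewrite <- Rpower_plus. apply Rpower_lt; lra.
    unfold Rpower. rewrite Rmult_1_l. apply exp_ln. lra.
Qed.

Definition pick {V : Type} (P : V -> Prop) : option V :=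
  match excluded_middle_informative (exists x, P x) with
  | left H => Some (proj1_sig (constructive_indefinite_description P H))
  | right _ => None
  end.

Lemma pick_some {V} (P : V -> Prop) x : pick P = Some x -> P x.
Proof.
  unfold pick. destruct excluded_middle_informative as [H|H]; [|discriminate].
  intros E; injection E; intros <-. apply proj2_sig.
Qed.

Lemma pick_ex {V} (P : V -> Prop) x : P x -> exists y, pick P = Some y.
Proof.
  unfold pick. destruct excluded_middle_informative as [H|H]; eauto.
  intros Hx; exfalso; eauto.
Qed.

Definition optl {V} (o : option V) : list V := match o with Some a => a :: nil | None => nil end.

Definition Sb {V : Type} (dl : V -> R -> list V) (sel : V -> Z -> option V) (j : V) (r : Z)
  : list (V * Z) :=
  map (fun a => (a, r)) (flat_map (fun c => optl (sel c r))
     (flat_map (fun c1 => dl c1 (4 * pow5 r)) (dl j (8 * pow5 r)))).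

Lemma fold_min_le {V} (f : V -> R) a l :
  fold_right (fun x m => Rmin (f x) m) (f a) l <= f a /\
  forall x, In x l -> fold_right (fun x m => Rmin (f x) m) (f a) l <= f x.
Proof.
  induction l as [|y l IH]; simpl.
  - split; [lra| tauto].
  - destruct IH as [H1 H2]. split.
    + eapply Rle_trans; [apply Rmin_r|auto].
    + intros x [<-|Hx]; [apply Rmin_l|]. eapply Rle_trans; [apply Rmin_r|auto].
Qed.

Lemma f_min_le {V} (F : list V) f j : In j F -> f_min F f <= f j.
Proof.
  destruct F as [|a l]; simpl; [tauto|]. intros H.
  destruct (fold_min_le f a l) as [H1 H2]. destruct H as [<-|H]; auto.
Qed.

Lemma f_min_pos {V} (F : list V) f : F <> nil -> (forall j, In j F -> 0 < f j) -> 0 < f_min F f.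
Proof.
  destruct F as [|a l]; [tauto|]. intros _ H. simpl.
  assert (Ha : 0 < f a) by (apply H; simpl; auto).
  assert (Hl : forall x, In x l -> 0 < f x) by (intros; apply H; simpl; auto).
  clear H. induction l as [|y l IH]; simpl; auto.
  apply Rmin_glb_lt; [apply Hl; simpl; auto| apply IH; intros; apply Hl; simpl; auto].
Qed.

Lemma pi_cost_app {V} (f : V -> R) l1 l2 : pi_cost f (l1 ++ l2) = pi_cost f l1 + pi_cost f l2.
Proof. induction l1; simpl; [lra|]. rewrite IHl1. lra. Qed.

Lemma pi_cost_map {V} (f : V -> R) r l :
  (forall a, In a l -> f a <= pow5 r) ->
  pi_cost f (map (fun a => (a, r)) l) <= INR (length l) * (8 * pow5 r).
Proof.
  induction l as [|a l IH]; intros H; [simpl; lra|].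
  unfold pi_cost in *; cbn [map fold_right length fst snd]. rewrite S_INR. assert (f a <= pow5 r) by (apply H; left; auto).
  assert (H2 := IH (fun x Hx => H x (in_cons _ _ _ Hx))). pose proof (pow5_pos r). lra.
Qed.

Lemma length_optl {V} (g : V -> option V) l : (length (flat_map (fun c => optl (g c)) l) <= length l)%nat.
Proof.
  induction l as [|a l IH]; simpl; auto. rewrite length_app. destruct (g a); simpl; lia.
Qed.

Lemma length_flat_map_le {V W} (g : V -> list W) l K :
  (forall x, INR (length (g x)) <= K) ->
  INR (length (flat_map g l)) <= INR (length l) * K.
Proof.
  intros H. induction l as [|a l IH]; [simpl; lra|].
  cbn [flat_map length]. rewrite length_app, plus_INR, S_INR. specialize (H a). lra.
Qed.

Lemma Sb_cost {V} (f : V -> R) dl sel j r K :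
  (forall c a, sel c r = Some a -> f a <= pow5 r) ->
  (forall x rho, INR (length (dl x rho)) <= K) -> 0 <= K ->
  pi_cost f (Sb dl sel j r) <= K * K * (8 * pow5 r).
Proof.
  intros Hs Hd HK. unfold Sb. eapply Rle_trans; [apply pi_cost_map|].
  - intros a Ha. apply in_flat_map in Ha as [c [_ Hc]].
    destruct (sel c r) eqn:E; simpl in Hc; [|tauto]. destruct Hc as [<-|[]]. eauto.
  - pose proof (pow5_pos r). apply Rmult_le_compat_r; [lra|].
    eapply Rle_trans; [apply le_INR, length_optl|].
    eapply Rle_trans; [apply length_flat_map_le; eauto|].
    apply Rmult_le_compat_r; auto.
Qed.

Lemma step_bound {V} (d : V -> V -> R) F f rmin rmax J par s a :
  metric d -> valid_J d F f rmin rmax J -> valid_parent d rmin rmax J par ->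
  (rmin <= s < rmax)%Z -> J s a -> d a (par a s) <= 25 * pow5 s.
Proof.
  intros Hm HJ Hp Hs Ha.
  destruct (HJ s ltac:(lia)) as [Hs1 _].
  destruct (HJ (s+1)%Z ltac:(lia)) as [_ [_ H3]].
  destruct (Hp a s Hs Ha) as [_ Hcl].
  destruct (Hs1 a Ha) as [HF Hf].
  assert (Hjp : Jprime F f (s+1) a).
  { split; auto. rewrite pow5_succ. pose proof (pow5_pos s). lra. }
  assert (E : pow5 (s + 1 + 1) = 25 * pow5 s) by (rewrite !pow5_succ; lra).
  destruct (classic (J (s+1)%Z a)) as [Hin|Hnin].
  - specialize (Hcl a Hin). assert (d a a = 0) by (apply (d_zero d Hm); auto).
    pose proof (pow5_pos s). lra.
  - destruct (H3 a Hjp Hnin) as [j' [Hj' Hd]]. specialize (Hcl j' Hj'). lra.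
Qed.

Lemma chain {V} (d : V -> V -> R) F f rmin rmax J par p :
  metric d -> valid_J d F f rmin rmax J -> valid_parent d rmin rmax J par ->
  forall n j0 k, (rmin <= k)%Z -> J k j0 -> (k + Z.of_nat n <= rmax)%Z ->
  d j0 p <= 7 * pow5 k ->
  snd (Nat.iter n (tree_step par) (j0, k)) = (k + Z.of_nat n)%Z /\
  J (snd (Nat.iter n (tree_step par) (j0, k))) (fst (Nat.iter n (tree_step par) (j0, k))) /\
  d (fst (Nat.iter n (tree_step par) (j0, k))) p <= 7 * pow5 (snd (Nat.iter n (tree_step par) (j0, k))).
Proof.
  intros Hm HJ Hp n. induction n as [|n IH]; intros j0 k Hk Hj Hr Hd.
  - simpl. rewrite Z.add_0_r. auto.
  - destruct (IH j0 k Hk Hj ltac:(lia) Hd) as [E [HJa Hda]].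
    change (Nat.iter (S n) (tree_step par) (j0, k)) with
      (tree_step par (Nat.iter n (tree_step par) (j0, k))).
    set (a := Nat.iter n (tree_step par) (j0, k)) in *.
    unfold tree_step; simpl.
    assert (Hs : (rmin <= snd a < rmax)%Z) by lia.
    destruct (Hp (fst a) (snd a) Hs HJa) as [HJ' _].
    pose proof (step_bound d F f rmin rmax J par (snd a) (fst a) Hm HJ Hp Hs HJa) as Hst.
    split; [lia|]. split; auto.
    rewrite pow5_succ. pose proof (d_tri d Hm (par (fst a) (snd a)) (fst a) p).
    rewrite (d_sym d Hm (par (fst a) (snd a)) (fst a)) in H.
    pose proof (pow5_pos (snd a)). lra.
Qed.

Lemma in_Sb {V} (d : V -> V -> R) F f rmin rmax J dl j r a :
  metric d -> valid_J d F f rmin rmax J -> (rmin <= r <= rmax)%Z ->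
  (forall x rho y, ball d x rho y -> exists c, In c (dl x rho) /\ ball d c (rho / 2) y) ->
  J r a -> d j a <= 8 * pow5 r ->
  In (a, r) (Sb dl (fun c r => pick (fun a => J r a /\ d c a <= 2 * pow5 r)) j r).
Proof.
  intros Hm HJ Hr Hdl Ha Hd.
  destruct (Hdl j (8 * pow5 r) a Hd) as [c1 [Hc1 Hd1]].
  destruct (Hdl c1 (4 * pow5 r) a ltac:(unfold ball in *; lra)) as [c2 [Hc2 Hd2]].
  unfold ball in *.
  assert (Hp2 : J r a /\ d c2 a <= 2 * pow5 r) by (split; [exact Ha| lra]).
  destruct (pick_ex (fun a => J r a /\ d c2 a <= 2 * pow5 r) a Hp2) as [a' Ea'].
  pose proof (pick_some _ _ Ea') as [Ha' Hd'].
  assert (a = a').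
  { apply NNPP; intros Hne. destruct (HJ r Hr) as [_ [Hsep _]].
    specialize (Hsep a a' Ha Ha' Hne). rewrite pow5_succ in Hsep.
    pose proof (d_tri d Hm a c2 a'). rewrite (d_sym d Hm a c2) in H. pose proof (pow5_pos r). lra. }
  subst a'. unfold Sb. apply in_map_iff. exists a. split; auto.
  apply in_flat_map. exists c2. split.
  - apply in_flat_map. exists c1. split; auto.
  - rewrite Ea'. simpl; auto.
Qed.

Lemma cover_cost_nonneg {V} (f : V -> R) L :
  (forall b, In b L -> 0 <= f (fst b) + snd b) -> 0 <= cover_cost f L.
Proof.
  induction L as [|b L IH]; intros H; simpl; [lra|].
  assert (0 <= f (fst b) + snd b) by (apply H; left; auto).
  assert (0 <= cover_cost f L) by (apply IH; intros; apply H; right; auto).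
  unfold cover_cost in *. lra.
Qed.

Lemma cover_cost_ge {V} (f : V -> R) L b :
  (forall b, In b L -> 0 <= f (fst b) + snd b) -> In b L -> f (fst b) + snd b <= cover_cost f L.
Proof.
  induction L as [|b' L IH]; intros H Hb; simpl in *; [tauto|].
  assert (0 <= f (fst b') + snd b') by (apply H; left; auto).
  assert (0 <= cover_cost f L) by (apply cover_cost_nonneg; intros; apply H; right; auto).
  unfold cover_cost in *.
  destruct Hb as [<-|Hb]; [lra|].
  assert (f (fst b) + snd b <= fold_right (fun b acc => f (fst b) + snd b + acc) 0 L)
    by (apply IH; auto). lra.
Qed.

Lemma flat_map_cost {V} (f : V -> R) (g : V * R -> list (V * Z)) L K :
  (forall b, In b L -> pi_cost f (g b) <= K * (f (fst b) + snd b)) ->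
  pi_cost f (flat_map g L) <= K * cover_cost f L.
Proof.
  induction L as [|b L IH]; intros H; simpl; [unfold pi_cost; simpl; lra|].
  rewrite pi_cost_app.
  assert (pi_cost f (g b) <= K * (f (fst b) + snd b)) by (apply H; left; auto).
  assert (pi_cost f (flat_map g L) <= K * cover_cost f L) by (apply IH; intros; apply H; right; auto).
  unfold cover_cost in *. simpl. lra.
Qed.

Lemma pi_cost_nodup {V} (f : V -> R) dec (l : list (V * Z)) :
  (forall x, In x l -> 0 <= f (fst x) + 7 * pow5 (snd x)) ->
  pi_cost f (nodup dec l) <= pi_cost f l.
Proof.
  induction l as [|x l IH]; intros H; simpl; [lra|].
  assert (0 <= f (fst x) + 7 * pow5 (snd x)) by (apply H; left; auto).
  assert (pi_cost f (nodup dec l) <= pi_cost f l) by (apply IH; intros; apply H; right; auto).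
  destruct (in_dec dec x l); unfold pi_cost in *; simpl; lra.
Qed.

Definition rof (rmax : Z) (m : R) : Z :=
  if Rle_dec m (pow5 rmax) then Zceil (log5 m) else rmax.

Lemma rof_spec rmin rmax m : 0 < m -> pow5 rmin <= m -> (rmin <= rmax)%Z ->
  (rmin <= rof rmax m <= rmax)%Z /\ pow5 (rof rmax m) <= 5 * m /\
  (m <= pow5 (rof rmax m) \/ rof rmax m = rmax).
Proof.
  intros Hm Hmin Hr. unfold rof. destruct Rle_dec as [H|H].
  - destruct (ceil_log5 m Hm) as [H1 H2]. set (k := Zceil (log5 m)) in *.
    split; [split|split; [lra|auto]].
    + apply pow5_le_inv. lra.
    + assert (pow5 k < pow5 (rmax + 1)) by (rewrite pow5_succ; lra).
      apply pow5_lt_inv in H0. lia.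
  - split; [lia|]. split; [lra|auto].
Qed.

Lemma Rmax_sum a b : 0 <= a -> 0 <= b -> Rmax a b <= a + b.
Proof. intros. unfold Rmax. destruct Rle_dec; lra. Qed.

Theorem lemma6 :
  exists c : R, 0 < c /\
  forall (V : Type) (d : V -> V -> R) (kappa W : R) (F : list V) (f : V -> R)
    (J : Z -> V -> Prop) (par : V -> Z -> V) (rs : V -> Z) (js : V -> V)
    (C : V -> Prop) (opt : R),
    metric d ->
    doubling d kappa ->
    is_diameter d W -> 0 < W ->
    (forall j, In j F -> 0 < f j) ->
    (exists j, In j F /\ f j <= pow5 (rho_max W)) ->
    valid_J d F f (rho_min F f) (rho_max W) J ->
    valid_parent d (rho_min F f) (rho_max W) J par ->
    valid_star d (rho_min F f) (rho_max W) J rs js ->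
    is_OPT d F f C opt ->
    exists S : list (V * Z),
      NoDup S /\
      (forall x, In x S -> inPi (rho_min F f) (rho_max W) J x) /\
      (forall p, C p -> exists x, In x S /\
          area d (rho_min F f) (rho_max W) J par rs js x p) /\
      pi_cost f S <= c * Rpower 2 (2 * kappa) * opt.
Proof.
  exists 80. split; [lra|].
  intros V d kappa W F f J par rs js C opt Hm Hdb Hdiam HW Hfpos [j0 [Hj0F Hj0f]] HJ Hpar Hstar HOPT.
  set (rmin := rho_min F f) in *. set (rmax := rho_max W) in *.
  assert (HFnil : F <> nil) by (intro E; rewrite E in Hj0F; auto).
  assert (Hfmin : 0 < f_min F f) by (apply f_min_pos; auto).
  assert (Hrmin : pow5 rmin <= f_min F f) by (apply floor_log5; auto).
  assert (Hrmax : W <= pow5 rmax) by (apply ceil_log5; auto).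
  assert (Hdle : forall x y, d x y <= W).
  { intros x y. apply (proj1 Hdiam). exists x, y. reflexivity. }
  assert (Hrr : (rmin <= rmax)%Z).
  { apply pow5_le_inv. pose proof (f_min_le F f j0 Hj0F). lra. }
  assert (Hdl : exists dl : V -> R -> list V, forall x rho,
    INR (length (dl x rho)) <= Rpower 2 kappa /\
    forall y, ball d x rho y -> exists c, In c (dl x rho) /\ ball d c (rho/2) y).
  { exists (fun x rho => proj1_sig (constructive_indefinite_description _ (Hdb x rho))).
    intros x rho. apply (proj2_sig (constructive_indefinite_description _ (Hdb x rho))). }
  destruct Hdl as [dl Hdl].
  set (K := Rpower 2 kappa) in *.
  assert (HK : 0 <= K) by (unfold K, Rpower; left; apply exp_pos).
  assert (HK2 : Rpower 2 (2*kappa) = K * K).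
  { unfold K. replace (2*kappa) with (kappa+kappa) by ring. apply Rpower_plus. }
  assert (Hroot : exists jr, J rmax jr).
  { destruct (HJ rmax ltac:(lia)) as [_ [_ H3]]. destruct (classic (J rmax j0)) as [H|H]; eauto.
    destruct (H3 j0 (conj Hj0F Hj0f) H) as [j' [? _]]; eauto. }
  destruct Hroot as [jr Hjr].
  assert (Hcov : forall p, covered d rmin rmax J p).
  { intros p. exists jr, rmax. split. split; simpl; [lia| auto]. unfold ball.
    specialize (Hdle jr p). pose proof (pow5_pos rmax). lra. }
  assert (Hopt0 : 0 <= opt).
  { apply (proj2 HOPT). intros L [HL _]. apply cover_cost_nonneg. intros b Hb.
    destruct (HL b Hb) as [H1 H2]. specialize (Hfpos _ H1). lra. }
  destruct (classic (exists p, C p)) as [[p0 Hp0]|HnoC].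
  2: { exists nil. split; [constructor|]. split; [simpl; tauto|].
       split; [intros p Hp; exfalso; eauto|].
       unfold pi_cost; simpl. rewrite HK2. apply Rmult_le_pos; [|auto].
       apply Rmult_le_pos; [lra|]. apply Rmult_le_pos; auto. }
  assert (Hoptpos : f_min F f <= opt).
  { apply (proj2 HOPT). intros L [HL HC]. destruct (HC p0 Hp0) as [b [Hb _]].
    assert (Hnn : forall b, In b L -> 0 <= f (fst b) + snd b).
    { intros b' Hb'. destruct (HL b' Hb') as [H1 H2]. specialize (Hfpos _ H1). lra. }
    pose proof (cover_cost_ge f L b Hnn Hb). destruct (HL b Hb) as [H1 H2].
    pose proof (f_min_le F f (fst b) H1). lra. }
  assert (HLex : exists L, feasible_cover d F C L /\ cover_cost f L <= 2 * opt).
  { apply NNPP. intros Hn. assert (2 * opt <= opt); [|lra].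
    apply (proj2 HOPT). intros L HL.
    destruct (Rle_lt_dec (2*opt) (cover_cost f L)) as [H|H]; auto.
    exfalso; apply Hn; exists L; split; auto; lra. }
  destruct HLex as [L [[HLF HLC] HLc]].
  set (sel := fun c r => pick (fun a => J r a /\ d c a <= 2 * pow5 r)).
  set (rb := fun b : V * R => rof rmax (Rmax (f (fst b)) (snd b))).
  assert (Hb_spec : forall b, In b L ->
    In (fst b) F /\ 0 <= snd b /\ 0 < Rmax (f (fst b)) (snd b) /\
    f (fst b) <= Rmax (f (fst b)) (snd b) /\ snd b <= Rmax (f (fst b)) (snd b) /\
    Rmax (f (fst b)) (snd b) <= f (fst b) + snd b /\
    (rmin <= rb b <= rmax)%Z /\ pow5 (rb b) <= 5 * Rmax (f (fst b)) (snd b) /\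
    (Rmax (f (fst b)) (snd b) <= pow5 (rb b) \/ rb b = rmax)).
  { intros b Hb. destruct (HLF b Hb) as [H1 H2]. specialize (Hfpos _ H1).
    pose proof (Rmax_l (f (fst b)) (snd b)). pose proof (Rmax_r (f (fst b)) (snd b)).
    pose proof (Rmax_sum (f (fst b)) (snd b) ltac:(lra) H2).
    pose proof (f_min_le F f (fst b) H1).
    destruct (rof_spec rmin rmax (Rmax (f (fst b)) (snd b)) ltac:(lra) ltac:(lra) Hrr) as [[A1 A2] [B D]].
    unfold rb. repeat split; auto; lra. }
  set (S0 := flat_map (fun b => Sb dl sel (fst b) (rb b)) L).
  assert (HS0 : forall x, In x S0 -> inPi rmin rmax J x).
  { intros x Hx. unfold S0 in Hx. apply in_flat_map in Hx as [b [Hb Hx]].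
    unfold Sb in Hx. apply in_map_iff in Hx as [a [<- Ha]].
    apply in_flat_map in Ha as [c [_ Hc]].
    destruct (sel c (rb b)) eqn:E; simpl in Hc; [|tauto]. destruct Hc as [<-|[]].
    apply pick_some in E as [HJa _]. split; simpl; auto. apply Hb_spec; auto. }
  assert (dec : forall x y : V * Z, {x = y} + {x <> y}).
  { intros x y. apply excluded_middle_informative. }
  exists (nodup dec S0). split; [apply NoDup_nodup|]. split.
  { intros x Hx. apply nodup_In in Hx. auto. }
  split.
  - intros p Hp. destruct (HLC p Hp) as [b [Hb Hpb]].
    destruct (Hb_spec b Hb) as [HjF [HR0 [Hm0 [Hfm [HRm [Hmsum [Hrr' [H5 Hdisj]]]]]]]].
    set (j := fst b) in *. set (R := snd b) in *. set (r := rb b) in *.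
    set (m := Rmax (f j) R) in *.
    destruct (Hstar p (Hcov p)) as [HPi [Hball [Hmin _]]].
    assert (Hrs : (rs p <= r)%Z).
    { destruct Hdisj as [Hle|Heq].
      - assert (Hjp : Jprime F f r j) by (split; auto; lra).
        assert (Hj' : exists j', J r j' /\ d j j' <= pow5 (r + 1)).
        { destruct (HJ r Hrr') as [_ [_ H3]]. destruct (classic (J r j)) as [H|H].
          - exists j. split; auto. assert (d j j = 0) by (apply (d_zero d Hm); auto).
            pose proof (pow5_pos (r+1)). lra.
          - apply H3; auto. }
        destruct Hj' as [j' [HJj' Hdj']]. apply (Hmin j' r).
        + split; simpl; auto.
        + unfold ball in *. rewrite pow5_succ in Hdj'.
          pose proof (d_tri d Hm j' j p). rewrite (d_sym d Hm j' j) in H. lra.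
      - rewrite Heq. apply HPi. }
    destruct HPi as [HPi1 HPi2]. simpl in HPi1, HPi2.
    set (n := Z.to_nat (r - rs p)).
    destruct (chain d F f rmin rmax J par p Hm HJ Hpar n (js p) (rs p) ltac:(lia) HPi2
      ltac:(unfold n; lia) Hball) as [E [HJa Hda]].
    set (a := Nat.iter n (tree_step par) (js p, rs p)) in *.
    assert (Er : snd a = r) by (rewrite E; unfold n; lia).
    rewrite Er in HJa, Hda.
    assert (Hja : d j (fst a) <= 8 * pow5 r).
    { destruct Hdisj as [Hle|Heq].
      - unfold ball in Hpb. pose proof (d_tri d Hm j p (fst a)).
        rewrite (d_sym d Hm p (fst a)) in H. lra.
      - rewrite Heq. specialize (Hdle j (fst a)). pose proof (pow5_pos rmax). lra. }
    exists a. split.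
    + apply nodup_In. unfold S0. apply in_flat_map. exists b. split; auto.
      replace a with (fst a, r) by (destruct a; simpl in *; f_equal; auto).
      apply (in_Sb d F f rmin rmax J dl j r (fst a) Hm HJ Hrr'); auto.
      intros x rho y Hy. apply (proj2 (Hdl x rho)); auto.
    + split; [apply Hcov|]. exists n. reflexivity.
  - eapply Rle_trans; [apply pi_cost_nodup|].
    { intros x Hx. destruct (HS0 x Hx) as [H1 H2]. destruct (HJ _ H1) as [H3 _].
      destruct (H3 _ H2) as [H4 _]. specialize (Hfpos _ H4). pose proof (pow5_pos (snd x)). lra. }
    eapply Rle_trans; [apply (flat_map_cost f _ L (40 * (K * K)))|].
    { intros b Hb. destruct (Hb_spec b Hb) as [_ [_ [_ [_ [_ [Hmsum [Hrr' [H5 _]]]]]]]].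
      eapply Rle_trans; [apply (Sb_cost f dl sel (fst b) (rb b) K)|].
      - intros c a E. apply pick_some in E as [HJa _]. destruct (HJ _ Hrr') as [H3 _].
        apply (H3 _ HJa).
      - intros x rho. apply Hdl.
      - auto.
      - replace (40 * (K * K) * (f (fst b) + snd b)) with (K * K * (40 * (f (fst b) + snd b))) by ring.
        apply Rmult_le_compat_l; [apply Rmult_le_pos; auto| lra]. }
    rewrite HK2. replace (80 * (K * K) * opt) with (40 * (K * K) * (2 * opt)) by ring.
    apply Rmult_le_compat_l; [|auto]. apply Rmult_le_pos; [lra|]. apply Rmult_le_pos; auto.
Qed.
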